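(* Let $n_0,n_1$ be positive integers with $\max\{n_0,n_1\}>1$ and let $r>1$ be an integer. Then every subset $\mathcal{Z}\subseteq\{1,2,\dots,r-1\}$ is admissible for $(n_0,n_1,r)$.
   Context: For integers $n,\ell>0$ and a finite-support integer sequence $\mu=(\mu_i)_{i\ge1}$, $\mathsf{K}_\ell(\mu,n)=n^\ell-\sum_{i=1}^{\ell}\mu_i n^{\ell-i}$ (with $0^0=1$). For a pair $(\eta,\omega)$ of nonnegative integer sequences $(\eta_\ell)_{\ell\ge1},(\omega_\ell)_{\ell\ge1}$ with finite support, let $\mathsf{K}^\pm_\ell=\mathsf{K}_\ell(\eta\pm\omega,n_0\pm n_1)$, let $\mathsf{r}(\eta,\omega)$ be the largest index in the union of their supports, and $\mathsf{K}^\pm=\mathsf{K}^\pm_{\mathsf{r}(\eta,\omega)}$. A subset $\mathcal{Z}\subseteq\{1,\dots,r-1\}$ is admissible for $(n_0,n_1,r)$ if there exists such a pair $(\eta,\omega)$ with $\mathsf{r}(\eta,\omega)=r$ and $\mathsf{K}^+=\mathsf{K}^-=0$ such that, for $\ell\in\{1,\dots,r-1\}$, the inequality $\mathsf{K}^+_\ell\ge|\mathsf{K}^-_\ell|$ fails exactly when $\ell\in\mathcal{Z}$. *)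

(* Defs.v *)
From mathcomp Require Import all_boot all_order all_algebra.
Set Implicit Arguments. Unset Strict Implicit. Unset Printing Implicit Defensive.
Import Order.TTheory GRing.Theory Num.Theory.
Local Open Scope ring_scope.

(* Integer sequences are functions nat -> int / nat -> nat indexed from 1;
   the value at index 0 is irrelevant and never used. *)

Definition Kfun (l : nat) (mu : nat -> int) (n : int) : int :=
  n ^+ l - \sum_(1 <= i < l.+1) mu i * n ^+ (l - i).

Definition fin_supp (s : nat -> nat) : Prop :=
  exists N : nat, forall i : nat, (N < i)%N -> s i = 0%N.

Definition rank_is (eta omega : nat -> nat) (r : nat) : Prop :=
  (1 <= r)%N /\ (eta r <> 0%N \/ omega r <> 0%N) /\
  (forall i : nat, (r < i)%N -> eta i = 0%N /\ omega i = 0%N).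

Definition Kplus (eta omega : nat -> nat) (n0 n1 : nat) (l : nat) : int :=
  Kfun l (fun i => (eta i)%:Z + (omega i)%:Z) (n0%:Z + n1%:Z).

Definition Kminus (eta omega : nat -> nat) (n0 n1 : nat) (l : nat) : int :=
  Kfun l (fun i => (eta i)%:Z - (omega i)%:Z) (n0%:Z - n1%:Z).

Definition admissible (n0 n1 r : nat) (Z : pred nat) : Prop :=
  exists eta omega : nat -> nat,
    [/\ fin_supp eta /\ fin_supp omega, rank_is eta omega r,
        Kplus eta omega n0 n1 r = 0, Kminus eta omega n0 n1 r = 0 &
        forall l : nat, (1 <= l)%N -> (l <= r - 1)%N ->
          (~ (`|Kminus eta omega n0 n1 l| <= Kplus eta omega n0 n1 l) <-> Z l)].

(* Main.v *)
Require Import Defs.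
From mathcomp Require Import all_boot all_order all_algebra.
From mathcomp Require Import zify ring lra.
Set Implicit Arguments. Unset Strict Implicit. Unset Printing Implicit Defensive.
Import Order.TTheory GRing.Theory Num.Theory.

Local Open Scope ring_scope.

Lemma Kfun0 mu (n : int) : Kfun 0 mu n = 1.
Proof. by rewrite /Kfun big_geq // subr0 expr0. Qed.

Lemma KfunS l mu (n : int) : Kfun l.+1 mu n = n * Kfun l mu n - mu l.+1.
Proof.
rewrite /Kfun big_nat_recr //= subnn expr0 mulr1 mulrBr -exprS opprD addrA.
congr (_ - _ - _); rewrite mulr_sumr; apply: eq_big_nat => i /andP[_ hi].
by rewrite subSn // exprS mulrCA.
Qed.

Section Constr.
Variables (n0 n1 : nat).
Let A : int := n0%:Z + n1%:Z.
Let B : int := n0%:Z - n1%:Z.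

Definition PP (s : int * int) : int := s.1 + 2 * s.2.

Definition step (z : bool) (s : int * int) : int * int :=
  let M := s.1 in let k := s.2 in
  if z then
    (if B * M < 0 then (B * M - (n0%:Z * M + A * k + 1), - (B * M) + (n0%:Z * M + A * k + 1) - 1)
     else (B * M + (n1%:Z * M + A * k + 1), -1))
  else (B * M, n1%:Z * M + A * k).

Definition etaS (z : bool) (s : int * int) : int :=
  if z then (if B * s.1 < 0 then n0%:Z * s.1 + A * s.2 + 1 else 0) else 0.
Definition omegaS (z : bool) (s : int * int) : int :=
  if z then (if B * s.1 < 0 then 0 else n1%:Z * s.1 + A * s.2 + 1) else 0.
Definition etaF (s : int * int) : int := n0%:Z * s.1 + A * s.2.
Definition omegaF (s : int * int) : int := n1%:Z * s.1 + A * s.2.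

Definition Inv (s : int * int) := 1 <= PP s /\ `|B * s.1| <= A * PP s.

Hypotheses (h0 : (0 < n0)%N) (h1 : (0 < n1)%N) (hm : (1 < maxn n0 n1)%N).

Lemma hA : 3 <= A.
Proof. rewrite /A; move: h0 h1 hm; case: (leqP n0 n1) => h; rewrite ?(maxn_idPr h) ?(maxn_idPl (ltnW h)); lia. Qed.

Lemma hAB : 2 <= A - `|B|.
Proof. rewrite /A /B; move: h0 h1; lia. Qed.

Lemma hpar : A * A - B * B = 4 * (n0%:Z * n1%:Z).
Proof. rewrite /A /B; ring. Qed.

Lemma key (M k : int) : 1 <= M + 2 * k ->
  4 * A <= (A - `|B|) * (A * (M + 2 * k) + `|B * M| + 2).
Proof.
move=> hP; have HA := hA; have hd := hAB.
have hb : 0 <= `|B| by [].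
have hY : 0 <= `|B * M| by [].
have [hP2|hP1] : 2 <= M + 2 * k \/ M + 2 * k = 1 by lia.
  have hX0 : A * 2 <= A * (M + 2 * k) by apply: ler_wpM2l; lia.
  move: (A * (M + 2 * k)) (`|B * M|) (A - `|B|) hX0 hY hd => X Y d hX hY' hd'.
  have g1 : 2 * X <= d * X by apply: ler_wpM2r; lia.
  have g2 : 0 <= d * (Y + 2) by apply: mulr_ge0; lia.
  have -> : d * (X + Y + 2) = d * X + d * (Y + 2) by ring.
  lia.
have hM1 : 1 <= `|M| by lia.
rewrite hP1 mulr1 normrM.
have h3 : `|B| * 1 <= `|B| * `|M| by apply: ler_wpM2l.
move: (`|B| * `|M|) h3 hd => Y hY3 hd'.
have -> : A = (A - `|B|) + `|B| by ring.
move: (A - `|B|) hd' => d hd''.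
nia.
Qed.

Lemma hpos (M k : int) : 1 <= M + 2 * k -> 4 <= A * (M + 2 * k) + `|B * M|.
Proof.
move=> hP; have HA := hA.
have hAB4 : 4 <= A + `|B| by rewrite /A /B; move: h0 h1 hm HA; rewrite /A; case: (leqP n0 n1) => h; rewrite ?(maxn_idPr h) ?(maxn_idPl (ltnW h)); lia.
have [hP2|hP1] : 2 <= M + 2 * k \/ M + 2 * k = 1 by lia.
  have hX0 : A * 2 <= A * (M + 2 * k) by apply: ler_wpM2l; lia.
  have : 0 <= `|B * M| by []. lia.
have hM1 : 1 <= `|M| by lia.
rewrite hP1 mulr1 normrM.
have h3 : `|B| * 1 <= `|B| * `|M| by apply: ler_wpM2l.
lia.
Qed.

Lemma step_ok z s : Inv s ->
  PP (step z s) = A * PP s - (etaS z s + omegaS z s) /\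
      (step z s).1 = B * s.1 - (etaS z s - omegaS z s) /\
      Inv (step z s) /\ 0 <= etaS z s /\ 0 <= omegaS z s /\
      (z -> PP (step z s) < `|(step z s).1|) /\ (~~ z -> `|(step z s).1| <= PP (step z s)).
Proof.
have HA := hA; have hd := hAB.
case: s => M k [/= I1 I2]; rewrite /PP /= in I1 I2 *.
have hK := key I1.
have hK2 := hpos I1.
case: z; rewrite /step /etaS /omegaS /Inv /PP /=.
  case: ifP => hBM; rewrite /=.
    set T := n0%:Z * M + A * k + 1.
    have hT : 2 * T = A * (M + 2 * k) + B * M + 2 by rewrite /T /A /B; ring.
    have hy : `|B * M - T| = T - B * M by lia.
    split; first by lia.
    split; first by lia.
    split; last by lia.
    split; first by lia.
    rewrite normrM hy.
    have hb : 0 <= `|B| by [].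
    nia.
  set T := n1%:Z * M + A * k + 1.
  have hT : 2 * T = A * (M + 2 * k) - B * M + 2 by rewrite /T /A /B; ring.
  have hy : `|B * M + T| = B * M + T by lia.
  split; first by lia.
  split; first by lia.
  split; last by lia.
  split; first by lia.
  rewrite normrM hy.
  have hb : 0 <= `|B| by [].
  nia.
have hE : B * M + 2 * (n1%:Z * M + A * k) = A * (M + 2 * k) by rewrite /A /B; ring.
rewrite hE.
split; first by lia.
split; first by lia.
split; last by lia.
split; first by nia.
rewrite normrM.
have hb : 0 <= `|B| by [].
have hbA : `|B| <= A by lia.
have : `|B| * `|B * M| <= A * `|B * M| by apply: ler_wpM2r.
have : A * `|B * M| <= A * (A * (M + 2 * k)) by apply: ler_wpM2l; lia.
lia.
Qed.

Lemma final_ok s : Inv s ->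
  A * PP s - (etaF s + omegaF s) = 0 /\ B * s.1 - (etaF s - omegaF s) = 0 /\
  0 <= etaF s /\ 0 <= omegaF s /\ 0 < etaF s + omegaF s.
Proof.
have HA := hA.
case: s => M k [/= I1 I2]; rewrite /PP /etaF /omegaF /= in I1 I2 *.
have hX0 : A * 1 <= A * (M + 2 * k) by apply: ler_wpM2l; lia.
have hE : 2 * (n0%:Z * M + A * k) = A * (M + 2 * k) + B * M by rewrite /A /B; ring.
have hE' : 2 * (n1%:Z * M + A * k) = A * (M + 2 * k) - B * M by rewrite /A /B; ring.
lia.
Qed.

End Constr.

Fixpoint st (n0 n1 : nat) (Z : pred nat) (l : nat) : int * int :=
  if l is l'.+1 then step n0 n1 (Z l) (st n0 n1 Z l') else (1, 0).

Lemma KplusS e w n0 n1 l : Kplus e w n0 n1 l.+1 =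
  (n0%:Z + n1%:Z) * Kplus e w n0 n1 l - ((e l.+1)%:Z + (w l.+1)%:Z).
Proof. exact: KfunS. Qed.

Lemma KminusS e w n0 n1 l : Kminus e w n0 n1 l.+1 =
  (n0%:Z - n1%:Z) * Kminus e w n0 n1 l - ((e l.+1)%:Z - (w l.+1)%:Z).
Proof. exact: KfunS. Qed.

Lemma absK (x : int) : 0 <= x -> (absz x)%:Z = x.
Proof. by move=> hx; rewrite gez0_abs. Qed.

Theorem mainTheorem8 (n0 n1 r : nat) (Z : pred nat) :
  (0 < n0)%N -> (0 < n1)%N -> (1 < maxn n0 n1)%N -> (1 < r)%N ->
  (forall l : nat, Z l -> (1 <= l)%N /\ (l <= r - 1)%N) ->
  admissible n0 n1 r Z.
Proof.
move=> h0 h1 hm hr hZ.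
pose S := st n0 n1 Z.
pose eta := fun l => if l == r then absz (etaF n0 n1 (S r.-1))
  else if (0 < l < r)%N then absz (etaS n0 n1 (Z l) (S l.-1)) else 0%N.
pose omega := fun l => if l == r then absz (omegaF n0 n1 (S r.-1))
  else if (0 < l < r)%N then absz (omegaS n0 n1 (Z l) (S l.-1)) else 0%N.
have IH : forall l, (l <= r.-1)%N -> [/\ Kplus eta omega n0 n1 l = PP (S l),
    Kminus eta omega n0 n1 l = (S l).1 & Inv n0 n1 (S l)].
  elim=> [|l IHl] hl.
    rewrite /Kplus /Kminus !Kfun0 /S /= /PP /Inv /=; split => //.
    rewrite /PP /= !mulr1 mulr0 addr0; lia.
  have [Hp Hm Hi] := IHl (ltnW hl).
  have [E1 [E2 [E3 [E4 [E5 _]]]]] := @step_ok n0 n1 h0 h1 hm (Z l.+1) _ Hi.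
  have hlr : (l.+1 == r) = false by apply/negbTE; lia.
  have hlr' : (0 < l.+1 < r)%N by lia.
  rewrite KplusS KminusS Hp Hm /eta /omega hlr hlr' /= !absK //.
have hr1 : r = (r.-1).+1 by lia.
have [Hp Hm Hi] := IH r.-1 (leqnn _).
have [F1 [F2 [F3 [F4 F5]]]] := @final_ok n0 n1 h0 h1 hm _ Hi.
exists eta, omega; split.
- by split; exists r => i hi; rewrite /eta /omega (gtn_eqF hi) /=; 
    have -> : (0 < i < r)%N = false by lia.
- split; first lia.
  split.
    rewrite /eta /omega eqxx.
    case: (altP (absz (etaF n0 n1 (S r.-1)) =P 0%N)) => [e0|]; last by left; apply/eqP.
    right => o0.
    have : (absz (etaF n0 n1 (S r.-1)))%:Z + (absz (omegaF n0 n1 (S r.-1)))%:Z = 0 by rewrite e0 o0.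
    rewrite !absK //; lia.
  by move=> i hi; rewrite /eta /omega (gtn_eqF hi) /=;
    have -> : (0 < i < r)%N = false by lia.
- rewrite hr1 KplusS Hp /eta /omega -hr1 eqxx !absK //.
- rewrite hr1 KminusS Hm /eta /omega -hr1 eqxx !absK //.
- move=> l hl1 hl2.
  have [Hp' Hm' Hi'] := IH l ltac:(lia).
  rewrite Hp' Hm'.
  case: l hl1 hl2 Hp' Hm' Hi' => // l _ hl2 _ _ _.
  have [Hp2 Hm2 Hi2] := IH l ltac:(lia).
  have [_ [_ [_ [_ [_ [G1 G2]]]]]] := @step_ok n0 n1 h0 h1 hm (Z l.+1) _ Hi2.
  rewrite /S /=.
  case: (Z l.+1) G1 G2 => G1 G2; split => //.
  + by move=> _; apply/negP; rewrite -ltNge; exact: G1.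
  + by move=> hh; exfalso; apply: hh; apply: G2.
Qed.
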